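(* Let $X$ be a compact metric space with metric $d$. If a continuous map $f\colon X\to X$ satisfies $X=R(f)$ and has the contractive shadowing property, then $X$ is a finite set.
   Context: For $x\in X$, the $\omega$-limit set $\omega(x,f)$ is the set of $y\in X$ such that $f^{i_j}(x)\to y$ for some sequence $0\le i_1<i_2<\cdots$. $R(f)=\{x\in X: x\in\omega(x,f)\}$. For $\delta>0$, a sequence $(x_i)_{i\ge0}$ is a $\delta$-pseudo orbit of $f$ if $d(f(x_i),x_{i+1})\le\delta$ for all $i\ge0$; it is $\epsilon$-shadowed by $x$ if $d(f^i(x),x_i)\le\epsilon$ for all $i\ge0$. $f$ has the contractive shadowing property if there are $0<L<1$ and $\delta_0>0$ such that for every $0<\delta\le\delta_0$, every $\delta$-pseudo orbit of $f$ is $L\delta$-shadowed by some point of $X$. *)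

(* Defs.v *)
From Stdlib Require Import Reals List.
Open Scope R_scope.

Definition is_metric {X : Type} (d : X -> X -> R) : Prop :=
  (forall x y, 0 <= d x y) /\
  (forall x y, d x y = 0 <-> x = y) /\
  (forall x y, d x y = d y x) /\
  (forall x y z, d x z <= d x y + d y z).

Definition metric_open {X : Type} (d : X -> X -> R) (U : X -> Prop) : Prop :=
  forall x, U x -> exists r, 0 < r /\ forall y, d x y < r -> U y.

Definition metric_compact {X : Type} (d : X -> X -> R) : Prop :=
  forall (I : Type) (U : I -> X -> Prop),
    (forall i, metric_open d (U i)) ->
    (forall x, exists i, U i x) ->
    exists l : list I, forall x, exists i, In i l /\ U i x.

Definition metric_continuous {X : Type} (d : X -> X -> R) (f : X -> X) : Prop :=
  forall x eps, 0 < eps -> exists delta, 0 < delta /\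
    forall y, d x y < delta -> d (f x) (f y) < eps.

Fixpoint iter {X : Type} (i : nat) (f : X -> X) (x : X) : X :=
  match i with O => x | S n => f (iter n f x) end.

Definition omega_limit {X : Type} (d : X -> X -> R) (f : X -> X) (x y : X) : Prop :=
  exists s : nat -> nat, (forall j, (s j < s (S j))%nat) /\
    forall eps, 0 < eps -> exists N, forall j, (N <= j)%nat ->
      d (iter (s j) f x) y < eps.

Definition recurrent {X : Type} (d : X -> X -> R) (f : X -> X) (x : X) : Prop :=
  omega_limit d f x x.

Definition pseudo_orbit {X : Type} (d : X -> X -> R) (f : X -> X)
  (delta : R) (xs : nat -> X) : Prop :=
  forall i, d (f (xs i)) (xs (S i)) <= delta.

Definition shadowed {X : Type} (d : X -> X -> R) (f : X -> X)
  (eps : R) (xs : nat -> X) (x : X) : Prop :=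
  forall i, d (iter i f x) (xs i) <= eps.

Definition contractive_shadowing {X : Type} (d : X -> X -> R) (f : X -> X) : Prop :=
  exists L delta0, 0 < L /\ L < 1 /\ 0 < delta0 /\
    forall delta, 0 < delta -> delta <= delta0 ->
      forall xs, pseudo_orbit d f delta xs ->
        exists x, shadowed d f (L * delta) xs x.

Definition finite_type (X : Type) : Prop :=
  exists l : list X, forall x, In x l.

(* Main.v *)
Require Import Defs.
From Stdlib Require Import Reals List.
From Stdlib Require Import Lra Lia Psatz Arith.
Open Scope R_scope.

Lemma iter_add {X} (f : X -> X) a b x : iter (a + b) f x = iter a f (iter b f x).
Proof. induction a; simpl; [reflexivity| now rewrite IHa]. Qed.

Lemma strict_ge (s : nat -> nat) : (forall j, (s j < s (S j))%nat) -> forall j, (j <= s j)%nat.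
Proof. intros H j; induction j; [lia| specialize (H j); lia]. Qed.

Lemma rec_time {X} (d : X -> X -> R) f x : recurrent d f x ->
  forall eps, 0 < eps -> forall B, exists m, (B <= m)%nat /\ (1 <= m)%nat /\ d (iter m f x) x < eps.
Proof.
  intros [s [Hs Hc]] eps Heps B.
  destruct (Hc eps Heps) as [N HN].
  exists (s (N + B + 1)%nat). pose proof (strict_ge s Hs (N+B+1)).
  split; [lia|split;[lia|]]. apply HN; lia.
Qed.

Lemma d_self {X} (d : X -> X -> R) : is_metric d -> forall x, d x x = 0.
Proof. intros (_&Hi&_&_) x. apply Hi. reflexivity. Qed.

Lemma iter_cont {X} (d : X -> X -> R) f : metric_continuous d f ->
  forall n x eps, 0 < eps -> exists delta, 0 < delta /\
    forall y, d x y < delta -> d (iter n f x) (iter n f y) < eps.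
Proof.
  intros Hc n; induction n; intros x eps He.
  - exists eps; split; auto.
  - destruct (Hc (iter n f x) eps He) as [d1 [Hd1 H1]].
    destruct (IHn x d1 Hd1) as [d2 [Hd2 H2]].
    exists d2; split; auto. intros y Hy. simpl. apply H1, H2, Hy.
Qed.

Lemma stepE {X} (d : X -> X -> R) f L delta0 :
  is_metric d -> (forall x, recurrent d f x) ->
  0 < L -> L < 1 -> 0 < delta0 ->
  (forall delta, 0 < delta -> delta <= delta0 -> forall xs,
      pseudo_orbit d f delta xs -> exists x, shadowed d f (L * delta) xs x) ->
  forall p z sigma Q T, (1 <= T)%nat -> 0 < sigma -> sigma < delta0 / 2 ->
  d Q p <= sigma -> d (iter T f Q) z <= sigma ->
  exists Q' T', (1 <= T')%nat /\ d Q' p <= L * (3 - L) / 2 * sigma /\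
     forall i, d (iter (T' + i) f Q') (iter i f z) <= L * (3 - L) / 2 * sigma.
Proof.
  intros Hm Hrec HL0 HL1 Hd0 Hcs p z sigma Q T HT Hs0 Hs1 HQp HTz.
  pose proof (d_self d Hm) as H0.
  destruct Hm as (Hnn & Hiff & Hsym & Htri).
  set (tau := (1 - L) * sigma / 2).
  assert (Htau : 0 < tau) by (unfold tau; nra).
  assert (Htau2 : tau < sigma) by (unfold tau; nra).
  destruct (rec_time d f p (Hrec p) tau Htau 0) as [m [_ [Hm1 Hmp]]].
  set (xs := fun t => if Nat.ltb t m then iter t f p
                      else if Nat.ltb t (m + T) then iter (t - m) f Q
                      else iter (t - m - T) f z).
  assert (Hpo : pseudo_orbit d f (sigma + tau) xs).
  { unfold pseudo_orbit, xs. intro i.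
    destruct (Nat.ltb_spec i m); destruct (Nat.ltb_spec (S i) m).
    - simpl. rewrite H0. lra.
    - destruct (Nat.ltb_spec (S i) (m + T)); [|lia].
      replace (S i - m)%nat with 0%nat by lia. simpl.
      replace (f (iter i f p)) with (iter m f p) by (replace m with (S i) by lia; reflexivity).
      pose proof (Htri (iter m f p) p Q). rewrite (Hsym p Q) in H3. lra.
    - lia.
    - destruct (Nat.ltb_spec i (m + T)); destruct (Nat.ltb_spec (S i) (m + T)).
      + replace (S i - m)%nat with (S (i - m)) by lia. simpl. rewrite H0. lra.
      + replace (S i - m - T)%nat with 0%nat by lia. simpl.
        replace (f (iter (i - m) f Q)) with (iter T f Q)
          by (replace T with (S (i - m)) by lia; reflexivity). lra.
      + lia.
      + replace (S i - m - T)%nat with (S (i - m - T)) by lia. simpl. rewrite H0. lra. }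
  destruct (Hcs (sigma + tau) ltac:(lra) ltac:(lra) xs Hpo) as [x0 Hsh].
  assert (Heq : L * (sigma + tau) = L * (3 - L) / 2 * sigma) by (unfold tau; field).
  exists x0, (m + T)%nat. split; [lia|split].
  - specialize (Hsh 0%nat). unfold xs in Hsh.
    destruct (Nat.ltb_spec 0 m); [|lia]. simpl in Hsh. lra.
  - intro i. specialize (Hsh (m + T + i)%nat). unfold xs in Hsh.
    destruct (Nat.ltb_spec (m + T + i) m); [lia|].
    destruct (Nat.ltb_spec (m + T + i) (m + T)); [lia|].
    replace (m + T + i - m - T)%nat with i in Hsh by lia. lra.
Qed.

Lemma lemE {X} (d : X -> X -> R) f L delta0 :
  is_metric d -> (forall x, recurrent d f x) ->
  0 < L -> L < 1 -> 0 < delta0 ->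
  (forall delta, 0 < delta -> delta <= delta0 -> forall xs,
      pseudo_orbit d f delta xs -> exists x, shadowed d f (L * delta) xs x) ->
  forall p z, d p z < delta0 / 2 -> forall eta, 0 < eta ->
  exists s, d (iter s f z) p < eta.
Proof.
  intros Hm Hrec HL0 HL1 Hd0 Hcs p z Hpz eta Heta.
  pose proof (d_self d Hm) as H0.
  pose proof Hm as (Hnn & Hiff & Hsym & Htri).
  set (q := L * (3 - L) / 2).
  assert (Hq0 : 0 < q) by (unfold q; nra).
  assert (Hq1 : q < 1) by (unfold q; nra).
  assert (Hqk : forall k, 0 < q ^ k <= 1).
  { induction k; simpl; nra. }
  destruct (Req_dec (d p z) 0) as [Hz|Hne].
  - exists 0%nat. simpl. apply Hiff in Hz. subst. rewrite H0. lra.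
  - assert (Hs0 : 0 < d p z) by (pose proof (Hnn p z); lra).
    set (s0 := d p z) in *.
    assert (Hgood : forall k, exists Q T, (1 <= T)%nat /\ d Q p <= q ^ k * s0 /\
                                         d (iter T f Q) z <= q ^ k * s0).
    { induction k.
      - destruct (rec_time d f z (Hrec z) s0 Hs0 0) as [T [_ [HT1 HT]]].
        exists z, T. simpl. rewrite Rmult_1_l. split; [auto|split].
        + rewrite Hsym; unfold s0; lra.
        + lra.
      - destruct IHk as [Q [T [HT [H1 H2]]]].
        destruct (Hqk k) as [Hk1 Hk2].
        destruct (stepE d f L delta0 Hm Hrec HL0 HL1 Hd0 Hcs p z (q ^ k * s0) Q T HT
                    ltac:(nra) ltac:(nra) H1 H2) as [Q' [T' [HT' [H3 H4]]]].
        exists Q', T'. split; [auto|split].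
        + simpl. fold q in H3. lra.
        + specialize (H4 0%nat). rewrite Nat.add_0_r in H4. simpl in H4 |- *.
          fold q in H4. lra. }
    destruct (pow_lt_1_zero q ltac:(rewrite Rabs_pos_eq; lra) (eta / (4 * s0)))
      as [N HN].
    { apply Rdiv_lt_0_compat; lra. }
    specialize (HN N (le_n N)).
    rewrite Rabs_pos_eq in HN by (apply pow_le; lra).
    assert (HNs : q ^ N * s0 < eta / 4).
    { apply (Rmult_lt_compat_r s0) in HN; [|lra].
      replace (eta / (4 * s0) * s0) with (eta / 4) in HN by (field; lra). exact HN. }
    destruct (Hgood N) as [Q [T [HT [H1 H2]]]].
    destruct (Hqk N) as [Hk1 Hk2].
    destruct (stepE d f L delta0 Hm Hrec HL0 HL1 Hd0 Hcs p z (q ^ N * s0) Q T HT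
                ltac:(nra) ltac:(nra) H1 H2) as [Q' [T' [HT' [H3 H4]]]].
    fold q in H3, H4.
    destruct (rec_time d f Q' (Hrec Q') (eta / 4) ltac:(lra) T') as [M [HM1 [_ HM]]].
    exists (M - T')%nat.
    specialize (H4 (M - T')%nat). replace (T' + (M - T'))%nat with M in H4 by lia.
    pose proof (Htri (iter (M - T') f z) (iter M f Q') p).
    pose proof (Htri (iter M f Q') Q' p).
    rewrite (Hsym (iter (M - T') f z) (iter M f Q')) in H.
    assert (q * (q ^ N * s0) < eta / 4) by nra.
    lra.
Qed.

Lemma lemD {X} (d : X -> X -> R) f L delta0 :
  is_metric d -> metric_continuous d f -> (forall x, recurrent d f x) ->
  0 < L -> L < 1 -> 0 < delta0 ->
  (forall delta, 0 < delta -> delta <= delta0 -> forall xs,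
      pseudo_orbit d f delta xs -> exists x, shadowed d f (L * delta) xs x) ->
  forall n p, (1 <= n)%nat -> 0 < d (iter n f p) p -> d (iter n f p) p <= delta0 / 2 ->
  exists j, (1 <= j)%nat /\ (j < n)%nat /\ d (iter j f p) p < d (iter n f p) p.
Proof.
  intros Hm Hcont Hrec HL0 HL1 Hd0 Hcs n p Hn Hr0 Hr1.
  pose proof (d_self d Hm) as H0.
  pose proof Hm as (Hnn & Hiff & Hsym & Htri).
  set (r := d (iter n f p) p) in *.
  set (xs := fun t => iter (t mod n) f p).
  assert (Hpo : pseudo_orbit d f r xs).
  { unfold pseudo_orbit, xs. intro i.
    assert (Hmod : (S i mod n = (i mod n + 1) mod n)%nat).
    { replace (S i) with (i + 1)%nat by lia. rewrite Nat.add_mod_idemp_l; lia. }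
    rewrite Hmod.
    assert (Ha : (i mod n < n)%nat) by (apply Nat.mod_upper_bound; lia).
    destruct (Nat.eq_dec (i mod n + 1) n) as [Heq|Hne].
    - rewrite Heq, Nat.mod_same by lia. simpl.
      assert (Hn' : iter (S (i mod n)) f p = iter n f p) by (f_equal; lia).
      simpl in Hn'. rewrite Hn'. unfold r; lra.
    - rewrite (Nat.mod_small (i mod n + 1) n) by (clear -Ha Hne; set (a := i mod n) in *; lia). rewrite Nat.add_1_r. simpl. rewrite H0. unfold r in *; lra. }
  destruct (Hcs r Hr0 ltac:(lra) xs Hpo) as [z0 Hsh].
  unfold shadowed, xs in Hsh.
  assert (Hz0 : d p z0 < delta0 / 2).
  { specialize (Hsh 0%nat). rewrite Nat.mod_0_l in Hsh by lia. simpl in Hsh.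
    rewrite Hsym. nra. }
  assert (Hpos : 0 < (1 - L) * r / 2) by nra.
  destruct (iter_cont d f Hcont n p _ Hpos) as [eta0 [He0 Hc0]].
  destruct (lemE d f L delta0 Hm Hrec HL0 HL1 Hd0 Hcs p z0 Hz0
              (Rmin eta0 ((1 - L) * r / 2)) ltac:(apply Rmin_pos; lra)) as [s Hs].
  pose proof (Rmin_l eta0 ((1 - L) * r / 2)).
  pose proof (Rmin_r eta0 ((1 - L) * r / 2)).
  destruct (Nat.eq_dec (s mod n) 0) as [Hj|Hj].
  - exfalso.
    assert (Hc : d (iter n f p) (iter n f (iter s f z0)) < (1 - L) * r / 2).
    { apply Hc0. rewrite Hsym. lra. }
    rewrite <- iter_add in Hc.
    specialize (Hsh (n + s)%nat).
    replace (n + s)%nat with (s + 1 * n)%nat in Hsh, Hc by lia.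
    rewrite Nat.mod_add, Hj in Hsh by lia. change (iter 0 f p) with p in Hsh.
    pose proof (Htri (iter n f p) (iter (s + 1 * n) f z0) p) as Ht.
    fold r in Ht. lra.
  - exists (s mod n)%nat. split; [lia|split].
    + apply Nat.mod_upper_bound; lia.
    + specialize (Hsh s).
      pose proof (Htri (iter (s mod n) f p) (iter s f z0) p).
      rewrite Hsym in Hsh. nra.
Qed.

Lemma all_periodic {X} (d : X -> X -> R) f L delta0 :
  is_metric d -> metric_continuous d f -> (forall x, recurrent d f x) ->
  0 < L -> L < 1 -> 0 < delta0 ->
  (forall delta, 0 < delta -> delta <= delta0 -> forall xs,
      pseudo_orbit d f delta xs -> exists x, shadowed d f (L * delta) xs x) ->
  forall n p, (1 <= n)%nat -> d (iter n f p) p <= delta0 / 2 ->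
  exists m, (1 <= m)%nat /\ iter m f p = p.
Proof.
  intros Hm Hcont Hrec HL0 HL1 Hd0 Hcs n.
  pose proof Hm as (Hnn & Hiff & Hsym & Htri).
  induction n as [n IH] using (well_founded_induction lt_wf).
  intros p Hn Hr.
  destruct (Req_dec (d (iter n f p) p) 0) as [Hz|Hz].
  - exists n. split; auto. apply Hiff; auto.
  - assert (0 < d (iter n f p) p) by (pose proof (Hnn (iter n f p) p); lra).
    destruct (lemD d f L delta0 Hm Hcont Hrec HL0 HL1 Hd0 Hcs n p Hn H Hr)
      as [j [Hj1 [Hjn Hj]]].
    apply (IH j Hjn p Hj1). lra.
Qed.

Lemma iter_period {X} (f : X -> X) N x : iter N f x = x -> forall q, iter (N * q) f x = x.
Proof.
  intros H q; induction q.
  - rewrite Nat.mul_0_r; reflexivity.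
  - replace (N * S q)%nat with (N + N * q)%nat by lia. rewrite iter_add, IHq; auto.
Qed.

Lemma iter_mod {X} (f : X -> X) N x : (N <> 0)%nat -> iter N f x = x ->
  forall k, iter k f x = iter (k mod N) f x.
Proof.
  intros HN H k. rewrite (Nat.div_mod k N) at 1 by auto.
  rewrite Nat.add_comm, iter_add, iter_period; auto.
Qed.

Lemma in_closure {X} (d : X -> X -> R) : is_metric d ->
  forall l y, (forall eta, 0 < eta -> exists u, In u l /\ d u y < eta) -> In y l.
Proof.
  intros Hm l y. pose proof Hm as (Hnn & Hiff & Hsym & Htri).
  induction l as [|a l IH]; intro H.
  - destruct (H 1 ltac:(lra)) as [u [[] _]].
  - destruct (Req_dec (d a y) 0) as [Hz|Hz].
    + left. apply Hiff; auto.
    + right. assert (Hp : 0 < d a y) by (pose proof (Hnn a y); lra).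
      apply IH. intros eta He.
      destruct (H (Rmin eta (d a y)) ltac:(apply Rmin_pos; lra)) as [u [[Hu|Hu] Hd]].
      * subst u. pose proof (Rmin_r eta (d a y)). lra.
      * exists u. split; auto. pose proof (Rmin_l eta (d a y)). lra.
Qed.

Theorem lemma2p1 (X : Type) (d : X -> X -> R) (f : X -> X) :
  is_metric d ->
  metric_compact d ->
  metric_continuous d f ->
  (forall x, recurrent d f x) ->
  contractive_shadowing d f ->
  finite_type X.
Proof.
  intros Hm Hcomp Hcont Hrec [L [delta0 [HL0 [HL1 [Hd0 Hcs]]]]].
  pose proof (d_self d Hm) as H0.
  pose proof Hm as (Hnn & Hiff & Hsym & Htri).
  set (d1 := delta0 / 2).
  assert (Hd1 : 0 < d1) by (unfold d1; lra).
  assert (Hloc : forall x, exists lx : list X, forall y, d x y < d1 -> In y lx).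
  { intro x.
    destruct (rec_time d f x (Hrec x) d1 Hd1 0) as [n [_ [Hn1 Hn]]].
    destruct (all_periodic d f L delta0 Hm Hcont Hrec HL0 HL1 Hd0 Hcs n x Hn1
                (Rlt_le _ _ Hn)) as [N [HN1 HN]].
    exists (map (fun i => iter i f x) (seq 0 N)).
    intros y Hy. apply (in_closure d Hm).
    intros eta Heta.
    destruct (lemE d f L delta0 Hm Hrec HL0 HL1 Hd0 Hcs y x
                ltac:(rewrite Hsym; exact Hy) eta Heta) as [s Hs].
    exists (iter (s mod N) f x). split.
    - apply (in_map (fun i => iter i f x)). apply in_seq. split; [lia|]. simpl.
      apply Nat.mod_upper_bound; lia.
    - rewrite <- iter_mod; auto; lia. }
  destruct (Hcomp X (fun x y => d x y < d1)) as [l Hl].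
  - intros i x Hx. exists (d1 - d i x). split; [lra|].
    intros w Hw. pose proof (Htri i x w). lra.
  - intro x. exists x. rewrite H0. lra.
  - assert (Hbig : forall l : list X, exists LL, forall x, In x l ->
                     forall y, d x y < d1 -> In y LL).
    { induction l0 as [|a l0 IH].
      - exists nil. intros x [].
      - destruct IH as [LL HLL]. destruct (Hloc a) as [la Hla].
        exists (la ++ LL). intros x [Hx|Hx] y Hy; apply in_or_app.
        + subst; left; auto.
        + right; eapply HLL; eauto. }
    destruct (Hbig l) as [LL HLL]. exists LL. intro y.
    destruct (Hl y) as [x [Hx Hxy]]. eapply HLL; eauto.
Qed.
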